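(* Let $(X_1,\xi_1),(X_2,\xi_2)$ be marked Dynkin diagrams and $\Delta_i=\Delta_{X_i}$. Then for all $k\ge1$, $$\det Z_k=(k-1)\Delta_1\Delta_2+\big(\det X_1\,\Delta_2+\det X_2\,\Delta_1\big).$$
   Context: A marked Dynkin diagram $(X,\xi)$ is the Dynkin diagram of a symmetrizable generalized Cartan matrix $C(X)$ together with a distinguished node $\xi$; $\det X:=\det C(X)$. $X(-1)$ denotes the diagram obtained from $X$ by deleting $\xi$ and all edges incident to it (with the convention $\det$ of the empty diagram is $1$), and $\Delta_X:=\det X-\det X(-1)$. For $k\ge1$, $Z_k=Z_k(X_1,X_2)$ is the Dynkin diagram obtained from the disjoint union of $X_1$, a path $A_k$ with nodes $1,\dots,k$ (consecutive nodes joined by simple edges) and $X_2$, by adding a simple edge between $\xi_1$ and node $1$ and one between node $k$ and $\xi_2$ (simple edge: Cartan entries $-1,-1$). *)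

(* Defs.v *)
From HB Require Import structures.
From mathcomp Require Import all_boot all_order all_algebra.
Set Implicit Arguments. Unset Strict Implicit. Unset Printing Implicit Defensive.
Import Order.TTheory GRing.Theory Num.Theory.
Local Open Scope ring_scope.

(* A Dynkin diagram is represented by its (integer) generalized Cartan matrix. *)
Definition is_gcm (n : nat) (A : 'M[int]_n) : Prop :=
  (forall i, A i i = 2) /\
  (forall i j, i != j -> A i j <= 0) /\
  (forall i j, (A i j == 0) = (A j i == 0)).

Definition symmetrizable (n : nat) (A : 'M[int]_n) : Prop :=
  exists d : 'I_n -> rat, (forall i, 0 < d i) /\
    (forall i j, d i * (A i j)%:~R = d j * (A j i)%:~R).

Definition symmetrizable_gcm (n : nat) (A : 'M[int]_n) : Prop :=
  is_gcm A /\ symmetrizable A.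

Definition delete_node (n : nat) (X : 'M[int]_n.+1) (xi : 'I_n.+1) : 'M[int]_n :=
  row' xi (col' xi X).

(* Delta_X = det X - det X(-1)  (det of the empty 0x0 matrix is 1) *)
Definition Delta (n : nat) (X : 'M[int]_n.+1) (xi : 'I_n.+1) : int :=
  \det X - \det (delete_node X xi).

(* Entries of the Cartan matrix of Z_k(X1,X2): nodes 0..n1 are X1,
   nodes n1+1 .. n1+k are the path A_k (path node m is n1+m),
   nodes n1+k+1 .. are X2. *)
Definition Zentry (n1 n2 : nat) (X1 : 'M[int]_n1.+1) (x1 : 'I_n1.+1)
    (X2 : 'M[int]_n2.+1) (x2 : 'I_n2.+1) (k : nat) (i j : nat) : int :=
  let a := n1.+1 in let b := (a + k)%N in
  if (i < a)%N && (j < a)%N then X1 (inord i) (inord j)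
  else if (b <= i)%N && (b <= j)%N then X2 (inord (i - b)) (inord (j - b))
  else if [&& (a <= i)%N, (i < b)%N, (a <= j)%N & (j < b)%N] then
    (if i == j then 2 else if (i == j.+1) || (j == i.+1) then -1 else 0)
  else if ((i == x1 :> nat) && (j == a)) || ((j == x1 :> nat) && (i == a)) then -1
  else if ((i == b.-1) && (j == b + x2)%N) || ((j == b.-1) && (i == b + x2)%N) then -1
  else 0.

Definition Zmx (n1 n2 : nat) (X1 : 'M[int]_n1.+1) (x1 : 'I_n1.+1)
    (X2 : 'M[int]_n2.+1) (x2 : 'I_n2.+1) (k : nat) : 'M[int]_(n1.+1 + k + n2.+1) :=
  \matrix_(i, j) Zentry X1 x1 X2 x2 k i j.

(* Main.v *)
Require Import Defs.
From HB Require Import structures.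
From mathcomp Require Import all_boot all_order all_algebra.
From mathcomp Require Import zify ring.
Import Order.TTheory GRing.Theory Num.Theory.
Set Implicit Arguments. Unset Strict Implicit. Unset Printing Implicit Defensive.
Local Open Scope ring_scope.

Definition dn (n : nat) (f : nat -> nat -> int) : int :=
  \det (\matrix_(i < n, j < n) f i j).
Definition minor (r c : nat) (f : nat -> nat -> int) := fun i j => f (bump r i) (bump c j).
Definition shift (m : nat) (f : nat -> nat -> int) := fun i j => f (m + i)%N (m + j)%N.

Lemma bumpE h k : bump h k = if (h <= k)%N then k.+1 else k.
Proof. rewrite /bump; case: leqP => _; lia. Qed.

Lemma dn_ext n f g : (forall i j, (i < n)%N -> (j < n)%N -> f i j = g i j) -> dn n f = dn n g.
Proof. move=> H; rewrite /dn; congr (\det _); apply/matrixP => i j; rewrite !mxE H //. Qed.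

Lemma dn_expand n f r : (r < n.+1)%N ->
  dn n.+1 f = \sum_(j < n.+1) f r j * ((-1) ^+ (r + j)%N * dn n (minor r j f)).
Proof.
move=> Hr; rewrite /dn (expand_det_row _ (Ordinal Hr)); apply: eq_bigr => j _.
rewrite mxE /cofactor /=; congr (_ * (_ * \det _)).
by apply/matrixP => i k; rewrite !mxE.
Qed.

Lemma dn_update n f g r c : (r < n.+1)%N -> (c < n.+1)%N ->
  (forall i j, (i < n.+1)%N -> (j < n.+1)%N -> (i != r) || (j != c) -> f i j = g i j) ->
  dn n.+1 f = dn n.+1 g + (f r c - g r c) * ((-1) ^+ (r + c)%N * dn n (minor r c g)).
Proof.
move=> Hr Hc H; rewrite (dn_expand f Hr) (dn_expand g Hr).
have Hm : forall j, (j < n.+1)%N -> dn n (minor r j f) = dn n (minor r j g).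
  move=> j Hj; apply: dn_ext => i k Hi Hk; rewrite /minor H //; rewrite !bumpE;
  repeat case: ifP => ?; lia.
rewrite (bigD1 (Ordinal Hc)) //= [in RHS](bigD1 (Ordinal Hc)) //=.
have -> : \sum_(i < n.+1 | i != Ordinal Hc) f r i * ((-1) ^+ (r + i)%N * dn n (minor r i f))
  = \sum_(i < n.+1 | i != Ordinal Hc) g r i * ((-1) ^+ (r + i)%N * dn n (minor r i g)).
  apply: eq_bigr => j Hj; rewrite Hm // H //.
  by apply/orP; right; move: Hj; apply: contra => /eqP Hj; apply/eqP/val_inj.
rewrite Hm //; ring.
Qed.

Lemma dn_lblock m n f : (forall i j, (i < m)%N -> (m <= j)%N -> (j < m + n)%N -> f i j = 0) ->
  dn (m + n)%N f = dn m f * dn n (shift m f).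
Proof.
move=> H; rewrite /dn -[X in \det X]submxK.
have -> : ursubmx (\matrix_(i < m + n, j < m + n) f i j) = 0 :> 'M_(m, n).
  apply/matrixP => i j; rewrite !mxE /= H //; have := ltn_ord j; lia.
rewrite (@det_lblock int); idtac. f_equal; f_equal; apply/matrixP => i j; rewrite !mxE //.
Qed.

Lemma dn_ublock m n f : (forall i j, (m <= i)%N -> (i < m + n)%N -> (j < m)%N -> f i j = 0) ->
  dn (m + n)%N f = dn m f * dn n (shift m f).
Proof.
move=> H; rewrite /dn -[X in \det X]submxK.
have -> : dlsubmx (\matrix_(i < m + n, j < m + n) f i j) = 0 :> 'M_(n, m).
  apply/matrixP => i j; rewrite !mxE /= H //; have := ltn_ord i; lia.
rewrite (@det_ublock int); f_equal; f_equal; apply/matrixP => i j; rewrite !mxE //.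
Qed.

Lemma dn_row0 n f r : (r < n)%N -> (forall j, (j < n)%N -> f r j = 0) -> dn n f = 0.
Proof.
case: n => [//|n] Hr H; rewrite (dn_expand f Hr) big1 // => j _; rewrite H ?mul0r //; exact: ltn_ord.
Qed.

Ltac solve_nat := rewrite ?bumpE;
  repeat match goal with |- context [if (?a <= ?b)%N then _ else _] => case: (leqP a b) => ? end;
  repeat (case: ifP => ?); try lia;
  try (match goal with |- ?F ?a ?b = ?F ?c ?d =>
         apply: (@f_equal2 _ _ _ F); lia end).

Ltac cases_le :=
  repeat match goal with |- context [if (?a <= ?b)%N then _ else _] => case: (leqP a b) => ? end.

Ltac solveH H1 H2 := rewrite ?bumpE; cases_le; try lia;
  repeat (case: ifP => ?); try lia;
  first [ rewrite H1; [ | lia | lia | lia] | rewrite H2; [ | lia | lia | lia] | idtac ];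
  repeat (case: ifP => ?); try lia.

Lemma sign_aux (A e e' s1 s2 X Y : int) : s1 * s2 = -1 ->
  A + e * (s1 * (e' * (s2 * (X * Y)))) = A - e * e' * X * Y.
Proof.
move=> H; have -> : e * (s1 * (e' * (s2 * (X * Y)))) = e * e' * X * Y * (s1 * s2) by ring.
rewrite H; ring.
Qed.

Lemma join p q f u v e e' : (u < p.+1)%N -> (v < q.+1)%N ->
  (forall i j, (i < p.+1)%N -> (p.+1 <= j)%N -> (j < p.+1 + q.+1)%N ->
     f i j = if (i == u) && (j == p.+1 + v)%N then e else 0) ->
  (forall i j, (p.+1 <= i)%N -> (i < p.+1 + q.+1)%N -> (j < p.+1)%N ->
     f i j = if (i == p.+1 + v)%N && (j == u) then e' else 0) ->
  dn (p.+1 + q.+1)%N f = dn p.+1 f * dn q.+1 (shift p.+1 f)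
     - e * e' * dn p (minor u u f) * dn q (minor v v (shift p.+1 f)).
Proof.
move=> Hu Hv H1 H2.
pose g i j := if (i == u) && (j == p.+1 + v)%N then 0 else f i j.
pose W := minor u (p.+1 + v)%N f.
pose h i j := if (i == p + v)%N && (j == u) then 0 else W i j.
have Hu' : (u < (p + q.+1)%N.+1)%N by lia.
have Hc' : (p.+1 + v < (p + q.+1)%N.+1)%N by lia.
have E1 := @dn_update (p + q.+1)%N f g u (p.+1 + v)%N Hu' Hc'.
have {E1} E1 : dn (p.+1 + q.+1)%N f = dn (p.+1 + q.+1)%N g
    + (f u (p.+1 + v)%N - g u (p.+1 + v)%N) * ((-1) ^+ (u + (p.+1 + v)%N)%N * dn (p + q.+1)%N (minor u (p.+1 + v)%N g)).
  apply: E1 => i j _ _; rewrite /g; case: ifP => //; lia.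
have Eg : dn (p.+1 + q.+1)%N g = dn p.+1 f * dn q.+1 (shift p.+1 f).
  rewrite dn_lblock; last first.
    move=> i j Hi Hj Hj'; rewrite /g H1 //; case: ifP => //; case: ifP => //; lia.
  congr (_ * _); apply: dn_ext => i j Hi Hj; rewrite /g /shift; solve_nat.
have EW : dn (p + q.+1)%N (minor u (p.+1 + v)%N g) = dn (p + q.+1)%N W.
  apply: dn_ext => i j Hi Hj; rewrite /g /W /minor; solve_nat.
have Hr2 : (p + v < (p + q)%N.+1)%N by lia.
have Hc2 : (u < (p + q)%N.+1)%N by lia.
have E2 := @dn_update (p + q)%N W h (p + v)%N u Hr2 Hc2.
have {E2} E2 : dn (p + q.+1)%N W = dn (p + q.+1)%N h
   + (W (p + v)%N u - h (p + v)%N u) * ((-1) ^+ (p + v + u)%N * dn (p + q)%N (minor (p + v)%N u h)).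
  rewrite addnS; apply: E2 => i j _ _; rewrite /h; case: ifP => //; lia.
have Eh : dn (p + q.+1)%N h = 0.
  rewrite -addSnnS dn_ublock; last first.
    move=> i j Hi Hi' Hj; rewrite /h /W /minor; solveH H1 H2.
  rewrite (@dn_row0 p.+1 h p) ?mul0r //.
  move=> j Hj; rewrite /h /W /minor; solveH H1 H2.
have Em : dn (p + q)%N (minor (p + v)%N u h) = dn p (minor u u f) * dn q (minor v v (shift p.+1 f)).
  rewrite dn_lblock; last first.
    move=> i j Hi Hj Hj'; rewrite /h /W /minor; solveH H1 H2.
  congr (_ * _); apply: dn_ext => i j Hi Hj; rewrite /h /W /minor /shift; solve_nat.
have EWv : W (p + v)%N u - h (p + v)%N u = e'.
  rewrite /h !eqxx /= subr0 /W /minor; solveH H1 H2.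
have Ef : f u (p.+1 + v)%N - g u (p.+1 + v)%N = e.
  rewrite /g !eqxx /= subr0; solveH H1 H2.
rewrite E1 Eg EW E2 Eh Em EWv Ef add0r.
apply: sign_aux.
rewrite -exprD.
have -> : (u + (p.+1 + v) + (p + v + u) = (2 * (u + v + p)).+1)%N by lia.
by rewrite -signr_odd oddS oddM /= expr1.
Qed.

Lemma dn_mx n (X : 'M[int]_n.+1) : dn n.+1 (fun i j => X (inord i) (inord j)) = \det X.
Proof. rewrite /dn; congr (\det _); by apply/matrixP => i j; rewrite mxE !inord_val. Qed.

Lemma dn_del n (X : 'M[int]_n.+1) (x : 'I_n.+1) :
  dn n (minor x x (fun i j => X (inord i) (inord j))) = \det (delete_node X x).
Proof.
rewrite /dn /delete_node; congr (\det _); apply/matrixP => i j; rewrite !mxE /minor.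
have E : forall k : 'I_n, inord (bump x k) = lift x k.
  by move=> k; apply: val_inj; rewrite /= inordK // -[bump _ _]/(nat_of_ord (lift x k)) ltn_ord.
by rewrite !E.
Qed.

Lemma dn0 f : dn 0 f = 1.
Proof. exact: det_mx00. Qed.

Lemma dn1 f : dn 1 f = f 0%N 0%N.
Proof. by rewrite (dn_expand f (r:=0)) // big_ord1 dn0 /= expr0 !mulr1. Qed.

Ltac first_atom c := lazymatch c with
  | ?x && _ => first_atom x | ?x || _ => first_atom x | ~~ ?x => first_atom x | _ => c end.

Ltac zsplit := repeat (match goal with |- context [if ?c then _ else _] =>
   let a := first_atom c in let E := fresh "E" in
   case E: a; cbn [andb orb negb]; try (exfalso; lia) end);
  try lia; try (apply: f_equal2; apply: f_equal; lia).

Section Main.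
Variables (n1 n2 : nat) (X1 : 'M[int]_n1.+1) (x1 : 'I_n1.+1)
    (X2 : 'M[int]_n2.+1) (x2 : 'I_n2.+1).

Definition G k := shift n1.+1 (Zentry X1 x1 X2 x2 k).

Ltac zcrush := rewrite /G /shift /Zentry; move: (ltn_ord x1) (ltn_ord x2) => ? ?; zsplit.

Lemma G_shift k i j : G k.+1 i.+1 j.+1 = G k i j.
Proof. zcrush. Qed.

Lemma G0 i j : (i < n2.+1)%N -> (j < n2.+1)%N -> G 0 i j = X2 (inord i) (inord j).
Proof. move=> Hi Hj; zcrush. Qed.

Lemma G_Y k : dn (k + n2.+1)%N (G k) = \det X2 + k%:Z * Delta X2 x2 /\
  dn (k.+1 + n2.+1)%N (G k.+1) = \det X2 + k.+1%:Z * Delta X2 x2.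
Proof.
elim: k => [|k [IH1 IH2]].
  have Y0 : dn (0 + n2.+1)%N (G 0) = \det X2.
    rewrite add0n -dn_mx; apply: dn_ext => i j Hi Hj; exact: G0.
  split; first by rewrite Y0 mul0r addr0.
  rewrite (@join 0 n2 (G 1) 0 x2 (-1) (-1)) //; first last.
  - move=> i j Hi Hj Hj'; zcrush.
  - move=> i j Hi Hj Hj'; zcrush.
  rewrite dn1 dn0.
  have -> : G 1 0 0 = 2 by zcrush.
  have -> : dn n2.+1 (shift 1 (G 1)) = \det X2.
    rewrite -dn_mx; apply: dn_ext => i j Hi Hj; rewrite /shift !add1n G_shift; exact: G0.
  have -> : dn n2 (minor x2 x2 (shift 1 (G 1))) = \det (delete_node X2 x2).
    rewrite -dn_del; apply: dn_ext => i j Hi Hj; rewrite /minor /shift !add1n G_shift G0 //;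
      rewrite bumpE; case: ifP; lia.
  rewrite /Delta; ring.
split=> //.
have -> : (k.+2 + n2.+1 = 0.+1 + (k.+1 + n2).+1)%N by lia.
rewrite (@join 0 (k.+1 + n2) (G k.+2) 0 0 (-1) (-1)) //; first last.
- move=> i j Hi Hj Hj'; zcrush.
- move=> i j Hi Hj Hj'; zcrush.
rewrite dn1 dn0.
have -> : G k.+2 0 0 = 2 by zcrush.
have -> : dn (k.+1 + n2).+1 (shift 1 (G k.+2)) = dn (k.+1 + n2.+1) (G k.+1).
  rewrite addnS; apply: dn_ext => i j Hi Hj; rewrite /shift !add1n G_shift //.
have -> : dn (k.+1 + n2) (minor 0 0 (shift 1 (G k.+2))) = dn (k + n2.+1) (G k).
  rewrite addSnnS; apply: dn_ext => i j Hi Hj; rewrite /minor /shift !bumpE /= !add1n !G_shift //.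
rewrite IH1 IH2 !intS; ring.
Qed.

End Main.

Ltac zcrush0 x1 x2 := rewrite /shift /minor /Zentry ?bumpE; move: (ltn_ord x1) (ltn_ord x2) => ? ?;
  repeat match goal with |- context [if (?a <= ?b)%N then _ else _] => case: (leqP a b) => ? end;
  zsplit.

Theorem lemma3p5 (n1 n2 : nat) (X1 : 'M[int]_n1.+1) (x1 : 'I_n1.+1)
    (X2 : 'M[int]_n2.+1) (x2 : 'I_n2.+1) (k : nat) :
  symmetrizable_gcm X1 -> symmetrizable_gcm X2 -> (1 <= k)%N ->
  \det (Zmx X1 x1 X2 x2 k) =
    (k%:Z - 1) * Delta X1 x1 * Delta X2 x2
    + (\det X1 * Delta X2 x2 + \det X2 * Delta X1 x1).
Proof.
move=> _ _; case: k => [//|k] _.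
have -> : \det (Zmx X1 x1 X2 x2 k.+1) = dn (n1.+1 + k.+1 + n2.+1)%N (Zentry X1 x1 X2 x2 k.+1) by [].
have -> : (n1.+1 + k.+1 + n2.+1 = n1.+1 + (k.+1 + n2).+1)%N by lia.
rewrite (@join n1 (k.+1 + n2) (Zentry X1 x1 X2 x2 k.+1) x1 0 (-1) (-1)) //; first last.
- move=> i j Hi Hj Hj'; zcrush0 x1 x2.
- move=> i j Hi Hj Hj'; zcrush0 x1 x2.
have -> : dn n1.+1 (Zentry X1 x1 X2 x2 k.+1) = \det X1.
  rewrite -dn_mx; apply: dn_ext => i j Hi Hj; zcrush0 x1 x2.
have -> : dn n1 (minor x1 x1 (Zentry X1 x1 X2 x2 k.+1)) = \det (delete_node X1 x1).
  rewrite -dn_del; apply: dn_ext => i j Hi Hj; zcrush0 x1 x2.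
have -> : dn (k.+1 + n2).+1 (shift n1.+1 (Zentry X1 x1 X2 x2 k.+1)) = dn (k.+1 + n2.+1) (G X1 x1 X2 x2 k.+1).
  by rewrite addnS.
have -> : dn (k.+1 + n2) (minor 0 0 (shift n1.+1 (Zentry X1 x1 X2 x2 k.+1))) = dn (k + n2.+1) (G X1 x1 X2 x2 k).
  rewrite addSnnS; apply: dn_ext => i j Hi Hj.
  rewrite -/(G X1 x1 X2 x2 k.+1) /minor !bumpE /=; exact: G_shift.
have [Y1 Y2] := G_Y X1 x1 X2 x2 k.
rewrite Y1 Y2 /Delta !intS; ring.
Qed.
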